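(* Let $n\ge 3$, let $b_1,\dots,b_{n-1}\in\mathbb{C}$, and let $B\in M_n(\mathbb{C})$ be the matrix with $B_{i,i+1}=b_i$, $B_{i+1,i}=-\bar b_i$ for $i=1,\dots,n-1$, and all other entries equal to $0$. Then the operator norm of $B$ satisfies $$\max_{1\le i\le n-2}\sqrt{|b_i|^2+|b_{i+1}|^2}\le\|B\|,\qquad \frac{2}{n}\sum_{i=1}^{n-1}|b_i|\le\|B\|,$$ $$\|B\|\le\max_{1\le i\le n-2}\big(|b_i|+|b_{i+1}|\big),\qquad \|B\|\le 2\cos\Big(\frac{\pi}{n+1}\Big)\max_{1\le i\le n-1}|b_i|.$$ *)

(* Defs.v *)
From HB Require Import structures.
From mathcomp Require Import all_boot all_order all_algebra.
From mathcomp Require Import complex.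
From mathcomp Require Import all_classical all_reals all_analysis.
Set Implicit Arguments. Unset Strict Implicit. Unset Printing Implicit Defensive.
Import Order.TTheory GRing.Theory Num.Theory.
Local Open Scope ring_scope.

Definition cmod (R : realType) (z : R[i]) : R :=
  Num.sqrt (complex.Re z ^+ 2 + complex.Im z ^+ 2).

Definition vnorm (R : realType) (n : nat) (x : 'cV[R[i]]_n) : R :=
  Num.sqrt (\sum_(k < n) cmod (x k 0) ^+ 2).

Definition opnorm (R : realType) (n : nat) (A : 'M[R[i]]_n) : R :=
  sup [set r : R | exists x : 'cV[R[i]]_n, vnorm x = 1 /\ r = vnorm (A *m x)].

(* The tridiagonal skew-Hermitian-type matrix: with 0-based indices,
   B_{i,i+1} = b i, B_{i+1,i} = - conj (b i) for i = 0..n-2, other entries 0. *)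
Definition tridB (R : realType) (n : nat) (b : nat -> R[i]) : 'M[R[i]]_n :=
  \matrix_(i < n, j < n)
    if j == i.+1 :> nat then b i
    else if i == j.+1 :> nat then - conjc (b j)
    else 0.

(* Main.v *)
Require Import Defs.
From HB Require Import structures.
From mathcomp Require Import all_boot all_order all_algebra.
From mathcomp Require Import complex.
From mathcomp Require Import all_classical all_reals all_analysis.
Import Order.TTheory GRing.Theory Num.Theory.
Local Open Scope ring_scope.
From mathcomp Require Import ring lra zify.

Section S.
Variable R : realType.
Local Open Scope complex_scope.
Implicit Types z w : R[i].

Lemma cmodC z : (cmod z)%:C = `|z|.
Proof. by rewrite normc_def. Qed.

Lemma cmod_ge0 z : 0 <= cmod z.
Proof. exact: sqrtr_ge0. Qed.

Lemma cmodM z w : cmod (z * w) = cmod z * cmod w.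
Proof. apply: complexI; by rewrite rmorphM /= !cmodC normrM. Qed.

Lemma cmodD z w : cmod (z + w) <= cmod z + cmod w.
Proof. by rewrite -lecR rmorphD /= !cmodC ler_normD. Qed.

Lemma cmodN z : cmod (- z) = cmod z.
Proof. apply: complexI; by rewrite !cmodC normrN. Qed.

Lemma cmodJ z : cmod (conjc z) = cmod z.
Proof. by case: z => a b; rewrite /cmod /= sqrrN. Qed.

Lemma cmod0 : cmod (0 : R[i]) = 0.
Proof. apply: complexI; by rewrite !cmodC normr0. Qed.

Lemma cmodR (x : R) : cmod x%:C = `|x|.
Proof. by rewrite /cmod /= expr0n addr0 sqrtr_sqr. Qed.

Lemma cmod_sum (I : Type) (r : seq I) (P : pred I) (F : I -> R[i]) :
  cmod (\sum_(i <- r | P i) F i) <= \sum_(i <- r | P i) cmod (F i).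
Proof.
elim/big_rec2: _ => [|i y1 y2 _ H]; first by rewrite cmod0.
by apply: le_trans (cmodD _ _) _; rewrite lerD2l.
Qed.

Lemma cmodi : cmod ('i%C : R[i]) = 1.
Proof. by rewrite /cmod /= expr0n add0r expr1n sqrtr1. Qed.

Lemma mulcJ z : z * conjc z = (cmod z ^+ 2)%:C.
Proof. case: z => a b; rewrite /cmod /= sqr_sqrtr ?addr_ge0 ?sqr_ge0 //.
by apply/eqP; rewrite eq_complex /=; apply/andP; split; apply/eqP; ring. Qed.

Lemma wCS n (p y v : 'I_n -> R) : (forall j, 0 <= p j) -> (forall j, 0 < v j) ->
 (\sum_j p j * y j)^+2 <= (\sum_j p j * v j) * (\sum_j p j * y j ^+2 / v j).
Proof.
move=> p0 v0; rewrite -subr_ge0.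
set t := fun j k => p j * p k * (v j * y k ^+ 2 / v k - y j * y k).
have -> : (\sum_j p j * v j) * (\sum_j p j * y j ^+2 / v j) - (\sum_j p j * y j)^+2
   = \sum_j \sum_k t j k.
  rewrite expr2 !big_distrl /= -sumrB; apply: eq_bigr => j _.
  rewrite !big_distrr -sumrB; apply: eq_bigr => k _; rewrite /t /=; ring.
have h2 : \sum_j \sum_k t j k = \sum_j \sum_k t k j by rewrite exchange_big.
suff : 0 <= (\sum_j \sum_k t j k) *+ 2 by rewrite pmulrn_lge0.
rewrite mulr2n {2}h2 -big_split /=; apply: sumr_ge0 => j _.
rewrite -big_split /=; apply: sumr_ge0 => k _.
have vj := v0 j; have vk := v0 k.
have -> : t j k + t k j = p j * p k * ((v j * y k - v k * y j) ^+ 2 / (v j * v k)).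
  by rewrite /t; field; rewrite !gt_eqF.
apply: mulr_ge0; first exact: mulr_ge0.
by apply: divr_ge0; [exact: sqr_ge0 | apply: mulr_ge0; exact: ltW].
Qed.

Lemma sq_le (a c : R) : 0 <= a -> a <= c -> a ^+ 2 <= c ^+ 2.
Proof. by move=> a0 ac; rewrite !expr2 ler_pM. Qed.

Lemma vnorm_ge0 n (x : 'cV[R[i]]_n) : 0 <= vnorm x.
Proof. exact: sqrtr_ge0. Qed.

Lemma vnorm_sqr n (x : 'cV[R[i]]_n) : vnorm x ^+ 2 = \sum_k cmod (x k 0) ^+ 2.
Proof. by rewrite sqr_sqrtr // sumr_ge0 // => k _; rewrite sqr_ge0. Qed.

Lemma schur n (A : 'M[R[i]]_n) (v : 'I_n -> R) lam : (0 < n)%N ->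
  (forall j, 0 < v j) -> (forall i j, cmod (A i j) = cmod (A j i)) ->
  (forall i, \sum_j cmod (A i j) * v j <= lam * v i) ->
  forall x, vnorm (A *m x) <= lam * vnorm x.
Proof.
move=> n0 v0 Asym Arow x.
have lam0 : 0 <= lam.
  have := Arow (Ordinal n0); rewrite -(pmulr_lge0 _ (v0 (Ordinal n0))).
  apply: le_trans; apply: sumr_ge0 => j _; apply: mulr_ge0; first exact: cmod_ge0.
  exact: ltW.
rewrite -ler_sqr ?nnegrE ?mulr_ge0 ?vnorm_ge0 // exprMn !vnorm_sqr.
set y := fun j => cmod (x j 0).
have y0 : forall j, 0 <= y j by move=> j; exact: cmod_ge0.
set c := fun i j => cmod (A i j).
have c0 : forall i j, 0 <= c i j by move=> i j; exact: cmod_ge0.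
apply: (@le_trans _ _ (\sum_i (\sum_j c i j * y j) ^+ 2)).
  apply: ler_sum => i _; apply: sq_le; first exact: cmod_ge0.
rewrite mxE; apply: le_trans; first exact: cmod_sum.
  by apply: ler_sum => j _; rewrite cmodM.
apply: (@le_trans _ _ (\sum_i (lam * v i) * (\sum_j c i j * y j ^+ 2 / v j))).
  apply: ler_sum => i _; apply: le_trans (wCS _ (c i) y v (c0 i) v0) _.
  apply: ler_wpM2r; last exact: Arow.
  apply: sumr_ge0 => j _; apply: divr_ge0; [apply: mulr_ge0 => //; exact: sqr_ge0|exact: ltW].
have -> : \sum_i (lam * v i) * (\sum_j c i j * y j ^+ 2 / v j)
   = lam * \sum_j (y j ^+ 2 / v j) * (\sum_i c j i * v i).
  rewrite big_distrr /=; under eq_bigr do rewrite big_distrr /=.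
  rewrite exchange_big /=; apply: eq_bigr => j _; rewrite big_distrr /= big_distrr /=.
  apply: eq_bigr => i _; rewrite /c Asym; ring.
rewrite expr2 -mulrA ler_wpM2l // big_distrr /=; apply: ler_sum => j _.
rewrite mulrC mulrA; have vj := v0 j.
apply: (@le_trans _ _ ((lam * v j) * y j ^+ 2 / v j)).
  have hx : 0 <= y j ^+ 2 / v j.
    by apply: mulr_ge0; [exact: sqr_ge0| rewrite invr_ge0 ltW].
  by have := ler_wpM2r hx (Arow j); rewrite !mulrA.
by rewrite /y le_eqVlt; apply/orP; left; apply/eqP; field; rewrite gt_eqF.
Qed.


Lemma opnorm_le n (A : 'M[R[i]]_n) lam : (exists x : 'cV[R[i]]_n, vnorm x = 1) ->
  (forall x : 'cV[R[i]]_n, vnorm x = 1 -> vnorm (A *m x) <= lam) -> opnorm A <= lam.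
Proof.
move=> [x0 hx0] H; apply: ge_sup; first by exists (vnorm (A *m x0)), x0.
by move=> r [x [hx ->]]; exact: H.
Qed.

Lemma opnorm_ge n (A : 'M[R[i]]_n) M x :
  (forall x : 'cV[R[i]]_n, vnorm x = 1 -> vnorm (A *m x) <= M) -> vnorm x = 1 ->
  vnorm (A *m x) <= opnorm A.
Proof.
move=> H hx; apply: ub_le_sup; last by exists x.
by exists M => r [y [hy ->]]; exact: H.
Qed.

Lemma sum_if_eq (V : zmodType) n m (F : nat -> V) :
  \sum_(0 <= k < n) (if k == m then F k else 0) = if (m < n)%N then F m else 0.
Proof.
elim: n => [|n IH]; first by rewrite big_geq.
rewrite big_nat_recr //= IH.
case: (ltngtP m n) => h.
- by rewrite addr0 (_ : (m < n.+1)%N = true) //; lia.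
- by rewrite addr0 (_ : (m < n.+1)%N = false) //; lia.
- by rewrite h ltnSn add0r.
Qed.

Lemma sum_tri (V : zmodType) n r (P Q : nat -> V) : (r < n)%N ->
  \sum_(0 <= k < n) (if k == r.+1 then P k else if r == k.+1 then Q k else 0)
  = (if (r.+1 < n)%N then P r.+1 else 0) + (if (0 < r)%N then Q r.-1 else 0).
Proof.
move=> rn.
have -> : \sum_(0 <= k < n) (if k == r.+1 then P k else if r == k.+1 then Q k else 0)
  = \sum_(0 <= k < n) ((if k == r.+1 then P k else 0) +
                        (if k == r.-1 then (if (0 < r)%N then Q k else 0) else 0)).
  apply: eq_bigr => k _.
  case: (k =P r.+1) => [->|h1].
    have -> : (r.+1 == r.-1) = false by apply/eqP; lia.
    by rewrite addr0.
  rewrite add0r; case: (r =P k.+1) => [->|h2] /=; first by rewrite eqxx.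
  case: (k =P r.-1) => [h3|//].
  have -> : (0 < r)%N = false by lia.
  done.
rewrite big_split /= !sum_if_eq; congr (_ + _).
case: (ltnP 0 r) => r0 //; last by case: ifP.
by rewrite (_ : (r.-1 < n)%N = true) //; lia.
Qed.


Lemma tridB_row n (b : nat -> R[i]) (r : 'I_n) (X : nat -> R[i]) :
  \sum_(k < n) tridB n b r k * X k =
  (if (r.+1 < n)%N then b r * X r.+1 else 0) +
  (if (0 < r)%N then - conjc (b r.-1) * X r.-1 else 0).
Proof.
rewrite -(sum_tri _ _ _ (fun k => b r * X k) (fun k => - conjc (b k) * X k) (ltn_ord r)).
rewrite big_mkord; apply: eq_bigr => k _; rewrite mxE.
by case: ifP => _ //; case: ifP => _ //; rewrite mul0r.
Qed.

Lemma tridB_cmod_row n (b : nat -> R[i]) (r : 'I_n) (w : nat -> R) :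
  \sum_(k < n) cmod (tridB n b r k) * w k =
  (if (r.+1 < n)%N then cmod (b r) * w r.+1 else 0) +
  (if (0 < r)%N then cmod (b r.-1) * w r.-1 else 0).
Proof.
rewrite -(sum_tri _ _ _ (fun k => cmod (b r) * w k) (fun k => cmod (b k) * w k) (ltn_ord r)).
rewrite big_mkord; apply: eq_bigr => k _; rewrite mxE.
case: ifP => _ //; case: ifP => _ //; first by rewrite cmodN cmodJ.
by rewrite cmod0 mul0r.
Qed.

Lemma tridB_sym n b (i j : 'I_n) : cmod (tridB n b i j) = cmod (tridB n (b : nat -> R[i]) j i).
Proof.
rewrite !mxE.
case: (eqVneq (j : nat) i.+1) => h1; case: (eqVneq (i : nat) j.+1) => h2 //.
- by exfalso; lia.
- by rewrite cmodN cmodJ.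
- by rewrite cmodN cmodJ.
Qed.


Definition ev n m : 'cV[R[i]]_n := \col_(k < n) (if (k : nat) == m then 1 else 0).

Lemma cmod1 : cmod (1 : R[i]) = 1.
Proof. by rewrite /cmod /= expr1n expr0n addr0 sqrtr1. Qed.

Lemma vnorm_ev n m : (m < n)%N -> vnorm (ev n m) = 1.
Proof.
move=> mn; rewrite /vnorm.
have -> : \sum_(k < n) cmod (ev n m k 0) ^+ 2 = \sum_(0 <= k < n) (if k == m then 1 else 0).
  rewrite big_mkord; apply: eq_bigr => k _; rewrite mxE.
  by case: ifP => _; rewrite ?cmod1 ?cmod0 ?expr1n ?expr0n.
by rewrite sum_if_eq mn sqrtr1.
Qed.

Lemma ub3x n (b : nat -> R[i]) : (3 <= n)%N ->
  forall x : 'cV[R[i]]_n, vnorm x = 1 -> 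
  vnorm (tridB n b *m x) <= \big[Num.max/0]_(0 <= i < n - 2) (cmod (b i) + cmod (b i.+1)).
Proof.
move=> n3; set S := \big[Num.max/0]_(0 <= i < n - 2) _.
have Sge : forall i, (i < n - 2)%N -> cmod (b i) + cmod (b i.+1) <= S.
  move=> i hi; rewrite /S; apply: (@bigmax_sup_seq _ _ _ _ _ i) => //; by rewrite mem_index_iota.
move=> x hx; rewrite -[S]mulr1 -hx.
apply: (@schur _ _ (fun _ => 1)) => //; first by lia.
  by move=> i j; exact: tridB_sym.
move=> r; rewrite (tridB_cmod_row _ b r (fun _ => 1)) !mulr1.
have c0 := cmod_ge0. have rn := ltn_ord r.
case: (ltnP r.+1 n) => h1; case: (ltnP 0 r) => h2.
- have := Sge r.-1 ltac:(lia); rewrite (_ : r.-1.+1 = r) //; first by rewrite addrC.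
  by lia.
- rewrite addr0; apply: le_trans (Sge 0%N ltac:(lia)).
  rewrite (_ : (r : nat) = 0%N); last by lia.
  by rewrite lerDl.
- rewrite add0r.
  have hS : (r - 2 < n - 2)%N by lia.
  have := Sge _ hS; rewrite (_ : (r - 2).+1 = r.-1); last by lia.
  by apply: le_trans; rewrite lerDr.
- by exfalso; lia.
Qed.


Lemma ub3 n (b : nat -> R[i]) : (3 <= n)%N ->
  opnorm (tridB n b) <= \big[Num.max/0]_(0 <= i < n - 2) (cmod (b i) + cmod (b i.+1)).
Proof.
move=> n3; apply: opnorm_le; first by exists (ev n 0); apply: vnorm_ev; lia.
exact: ub3x.
Qed.

Lemma angle_le (N k : nat) : (k <= N.+1)%N -> k%:R * (pi / N.+1%:R) <= pi :> R.
Proof.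
move=> h; rewrite mulrA ler_pdivrMr ?ltr0Sn // mulrC ler_pM2l ?pi_gt0 //.
by rewrite ler_nat.
Qed.

Lemma angle_lt (N k : nat) : (k < N.+1)%N -> k%:R * (pi / N.+1%:R) < pi :> R.
Proof.
move=> h; rewrite mulrA ltr_pdivrMr ?ltr0Sn // mulrC ltr_pM2l ?pi_gt0 //.
by rewrite ltr_nat.
Qed.

Lemma ub4 n (b : nat -> R[i]) : (3 <= n)%N ->
  opnorm (tridB n b) <= 2 * cos (pi / (n.+1)%:R) *
                  \big[Num.max/0]_(0 <= i < n - 1) cmod (b i).
Proof.
move=> n3; set th := pi / (n.+1)%:R; set M := \big[Num.max/0]_(0 <= i < n - 1) _.
have M0 : 0 <= M by rewrite /M; apply: bigmax_ge_id.
have Mge : forall i, (i < n - 1)%N -> cmod (b i) <= M.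
  move=> i hi; rewrite /M; apply: (@bigmax_sup_seq _ _ _ _ _ i) => //; by rewrite mem_index_iota.
have th0 : 0 < th by rewrite /th divr_gt0 ?pi_gt0 ?ltr0Sn.
have sk0 : forall k, (k <= n.+1)%N -> 0 <= sin (k%:R * th).
  move=> k hk; apply: sin_ge0_pi; rewrite mulr_ge0 ?ler0n ?(ltW th0) //=.
  by rewrite /th; apply: angle_le.
have skp : forall k, (0 < k)%N -> (k < n.+1)%N -> 0 < sin (k%:R * th).
  move=> k hk hk'; apply: sin_gt0_pi; rewrite mulr_gt0 ?ltr0n //=.
  by rewrite /th; apply: angle_lt.
have e : forall k, (k.+1)%:R * th = k%:R * th + th.
  by move=> k; rewrite -natr1 mulrDl mul1r.
apply: opnorm_le; first by exists (ev n 0); apply: vnorm_ev; lia.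
move=> x hx; suff H : vnorm (tridB n b *m x) <= 2 * cos th * M * vnorm x by rewrite hx mulr1 in H.
apply: (@schur _ _ (fun j : 'I_n => sin ((j : nat).+1%:R * th))) => //; first by lia.
- by move=> j; apply: skp => //; rewrite ltnS.
- by move=> i j; exact: tridB_sym.
move=> r; rewrite (tridB_cmod_row _ b r (fun k => sin (k.+1%:R * th))) /=.
have rn := ltn_ord r.
apply: (@le_trans _ _ (M * sin (r.+2%:R * th) + M * sin ((r : nat)%:R * th))).
  apply: lerD.
    case: (ltnP r.+1 n) => h1.
      by apply: ler_wpM2r; [apply: sk0; lia| apply: Mge; lia].
    by apply: mulr_ge0 => //; apply: sk0; lia.
  case: (ltnP 0 r) => h2.
    rewrite (_ : r.-1.+1 = r); last by lia.
    by apply: ler_wpM2r; [apply: sk0; lia| apply: Mge; lia].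
  by apply: mulr_ge0 => //; apply: sk0; lia.
rewrite le_eqVlt; apply/orP; left; apply/eqP.
have e2 : (r : nat)%:R * th = (r : nat).+1%:R * th - th by rewrite e addrK.
rewrite e2 e sinD sinB; ring.
Qed.


Lemma sum_ord_if (V : zmodType) n m (hm : (m < n)%N) (G : 'I_n -> V) :
  \sum_(k < n) (if (k : nat) == m then G k else 0) = G (Ordinal hm).
Proof.
rewrite -big_mkcond /=.
have -> : \sum_(k < n | (k : nat) == m) G k = \sum_(k < n | k == Ordinal hm) G k by [].
by rewrite big_pred1_eq.
Qed.

Lemma lb1 n (b : nat -> R[i]) i M : (i < n - 2)%N ->
  (forall x : 'cV[R[i]]_n, vnorm x = 1 -> vnorm (tridB n b *m x) <= M) ->
  Num.sqrt (cmod (b i) ^+ 2 + cmod (b i.+1) ^+ 2) <= opnorm (tridB n b).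
Proof.
move=> hi HM.
have hi1 : (i.+1 < n)%N by lia.
have hi0 : (i < n)%N by lia.
have hi2 : (i.+2 < n)%N by lia.
have hx : vnorm (ev n i.+1) = 1 by apply: vnorm_ev.
suff <- : vnorm (tridB n b *m ev n i.+1) = Num.sqrt (cmod (b i) ^+ 2 + cmod (b i.+1) ^+ 2).
  exact: (opnorm_ge _ _ _ _ HM hx).
rewrite /vnorm; congr Num.sqrt.
transitivity (\sum_(r < n) ((if (r : nat) == i then cmod (b i) ^+ 2 else 0) +
                           (if (r : nat) == i.+2 then cmod (b i.+1) ^+ 2 else 0))).
  apply: eq_bigr => r _.
  have -> : (tridB n b *m ev n i.+1) r 0 = tridB n b r (Ordinal hi1).
    rewrite mxE -(sum_ord_if _ _ _ hi1 (fun k => tridB n b r k)).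
    by apply: eq_bigr => k _; rewrite /ev mxE; case: ifP => _; rewrite ?mulr1 ?mulr0.
  rewrite mxE /=.
  case: (eqVneq (r : nat) i) => [->|ne1].
    rewrite eqxx (_ : (i == i.+2) = false) ?addr0 //; apply/eqP; lia.
  rewrite add0r (_ : (i.+1 == (r : nat).+1) = false); last by apply/eqP; lia.
  case: (eqVneq (r : nat) i.+2) => [_|ne2]; first by rewrite cmodN cmodJ.
  by rewrite cmod0 expr0n.
by rewrite big_split /= (sum_ord_if _ _ _ hi0) (sum_ord_if _ _ _ hi2).
Qed.


Lemma cmodV z : cmod (z^-1) = (cmod z)^-1.
Proof. by apply: complexI; rewrite fmorphV /= !cmodC normfV. Qed.

Lemma cmod_eq0 z : (cmod z == 0) = (z == 0).
Proof.
apply/idP/idP => [/eqP h|/eqP ->]; last by rewrite cmod0.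
by rewrite -normr_eq0 -cmodC h.
Qed.

Definition uph (b : nat -> R[i]) k : R[i] :=
  if b k == 0 then 1 else 'i * conjc (b k) / (cmod (b k))%:C.

Fixpoint wph (b : nat -> R[i]) k : R[i] := if k is k'.+1 then wph b k' * uph b k' else 1.

Lemma uph_mul b k : b k * uph b k = 'i * (cmod (b k))%:C.
Proof.
rewrite /uph; case: eqP => [->|nz]; first by rewrite cmod0 mul0r mulr0.
have c0 : (cmod (b k))%:C != 0.
  by rewrite (inj_eq (@complexI _)) cmod_eq0; apply/eqP.
rewrite mulrA mulrCA mulcJ rmorphXn /= expr2 mulrA mulfK //.
Qed.

Lemma cmod_uph b k : cmod (uph b k) = 1.
Proof.
rewrite /uph; case: eqP => [_|nz]; first exact: cmod1.
have c0 : cmod (b k) != 0 by rewrite cmod_eq0; apply/eqP.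
rewrite !cmodM cmodi cmodJ cmodV cmodR ger0_norm ?cmod_ge0 // mul1r divff //.
Qed.

Lemma cmod_wph b k : cmod (wph b k) = 1.
Proof. by elim: k => [|k IH] /=; rewrite ?cmod1 // cmodM IH cmod_uph mulr1. Qed.

Lemma wphJ b k : conjc (wph b k) * wph b k = 1.
Proof. by rewrite mulrC mulcJ cmod_wph expr1n. Qed.


Lemma sum_shift1 (V : zmodType) n (G : nat -> V) : (0 < n)%N ->
  \sum_(0 <= r < n) (if (r.+1 < n)%N then G r else 0) = \sum_(0 <= r < n - 1) G r.
Proof.
case: n => // m _; rewrite subn1 /= big_nat_recr //= ltnn addr0.
by apply: eq_big_nat => r /andP[_ h]; rewrite ltnS h.
Qed.

Lemma sum_shift2 (V : zmodType) n (G : nat -> V) : (0 < n)%N ->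
  \sum_(0 <= r < n) (if (0 < r)%N then G r.-1 else 0) = \sum_(0 <= r < n - 1) G r.
Proof.
case: n => // m _; rewrite subn1 /= big_nat_recl //= add0r.
by [].
Qed.

Lemma iJ : conjc ('i : R[i]) = - 'i.
Proof. by apply/eqP; rewrite eq_complex /= oppr0 !eqxx. Qed.

Lemma CS1 n (y : 'I_n -> R) : (\sum_j y j)^+2 <= n%:R * \sum_j y j ^+2.
Proof.
have e1 : \sum_j 1 * y j = \sum_j y j by apply: eq_bigr => j _; rewrite mul1r.
have e2 : \sum_(j < n) (1:R) * 1 = n%:R.
  by rewrite (eq_bigr (fun _ => 1)) ?sumr_const ?card_ord // => j _; rewrite mulr1.
have e3 : \sum_j 1 * y j ^+ 2 / 1 = \sum_j y j ^+ 2.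
  by apply: eq_bigr => j _; rewrite mul1r divr1.
rewrite -e1 -e2 -e3; apply: wCS => j; by rewrite ?ler01 ?ltr01.
Qed.

Lemma conj_iR (c : R) : conjc ('i * c%:C) = - ('i * c%:C).
Proof. by apply/eqP; rewrite eq_complex /= !mul0r !mul1r !subr0 !add0r !oppr0 !eqxx. Qed.

Lemma lb2 n (b : nat -> R[i]) M : (0 < n)%N ->
  (forall x : 'cV[R[i]]_n, vnorm x = 1 -> vnorm (tridB n b *m x) <= M) ->
  2 / n%:R * (\sum_(0 <= i < n - 1) cmod (b i)) <= opnorm (tridB n b).
Proof.
move=> n0 HM.
set s := Num.sqrt (n%:R : R).
have s0 : 0 < s by rewrite sqrtr_gt0 ltr0n.
have ss : s * s = n%:R by rewrite -expr2 sqr_sqrtr ?ler0n.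
set S : R[i] := s%:C.
have S0 : S != 0.
  by apply/eqP => /(congr1 (@complex.Re R)) /= h; move: s0; rewrite h ltxx.
have SJ : conjc S = S by rewrite conjc_real.
have SS : S * S = n%:R by rewrite -rmorphM /= ss rmorph_nat.
set X := fun k => wph b k / S.
set x : 'cV[R[i]]_n := \col_(k < n) X k.
have cX : forall k, cmod (X k) = s^-1.
  by move=> k; rewrite cmodM cmod_wph cmodV cmodR ger0_norm ?(ltW s0) // mul1r.
have hx : vnorm x = 1.
  rewrite /vnorm; under eq_bigr do rewrite mxE cX.
  rewrite sumr_const card_ord -mulr_natl exprVn expr2 ss mulfV ?sqrtr1 //.
  by rewrite pnatr_eq0 -lt0n.
apply: le_trans (opnorm_ge _ _ _ _ HM hx).
set y := fun r : 'I_n => (tridB n b *m x) r 0.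
have yE : forall r : 'I_n, y r = (if (r.+1 < n)%N then b r * X r.+1 else 0) +
     (if (0 < r)%N then - conjc (b r.-1) * X r.-1 else 0).
  move=> r; rewrite /y mxE -(tridB_row _ b r X); apply: eq_bigr => k _; rewrite /x !mxE //.
have cA : (\sum_r cmod (y r)) / s <= vnorm (tridB n b *m x).
  rewrite -ler_sqr ?nnegrE ?vnorm_ge0 ?divr_ge0 ?sumr_ge0 ?(ltW s0) //; last first.
    by move=> ? _; exact: cmod_ge0.
  rewrite vnorm_sqr.
  have h := CS1 _ (fun r => cmod (y r)).
  rewrite expr_div_n [s ^+ 2]expr2 ss ler_pdivrMr ?ltr0n // mulrC.
  exact: h.
apply: le_trans cA.
set z := \sum_(r < n) conjc (X r) * y r.
have XJ : forall k, conjc (X k) = conjc (wph b k) / S.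
  move=> k; rewrite /X rmorphM fmorphV; congr (_ * _^-1).
  by apply/eqP; rewrite eq_complex /= oppr0 !eqxx.
set G := fun r => 'i * (cmod (b r))%:C / n%:R.
have gE : forall r, conjc (X r) * (b r * X r.+1) = G r.
  move=> r; rewrite XJ /X /=.
  transitivity ((conjc (wph b r) * wph b r) * (b r * uph b r) / (S * S)); first by field.
  by rewrite wphJ uph_mul SS mul1r.
have hE : forall r, conjc (X r.+1) * (- conjc (b r) * X r) = G r.
  move=> r; rewrite XJ /X rmorphM.
  transitivity (- conjc (b r * uph b r) * (conjc (wph b r) * wph b r) / (S * S)).
    by rewrite rmorphM /=; field.
  by rewrite wphJ uph_mul SS conj_iR /G; ring.
have pw : forall r : 'I_n, conjc (X r) * y r =
    (if (r.+1 < n)%N then G r else 0) + (if (0 < r)%N then G r.-1 else 0).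
  move=> r; rewrite yE mulrDr; congr (_ + _); case: ifP => h; rewrite ?mulr0 //.
  by rewrite -(hE r.-1) prednK.
have zE : z = 'i * (2 / n%:R * \sum_(0 <= i < n - 1) cmod (b i))%:C.
  rewrite /z (eq_bigr _ (fun r _ => pw r)) big_split /=.
  rewrite -(big_mkord xpredT (fun r => if (r.+1 < n)%N then G r else 0)).
  rewrite -(big_mkord xpredT (fun r => if (0 < r)%N then G r.-1 else 0)).
  rewrite sum_shift1 // sum_shift2 // -big_split /= mulr_sumr rmorph_sum mulr_sumr.
  apply: eq_bigr => r _; rewrite /G !rmorphM fmorphV !rmorph_nat; field.
  by rewrite pnatr_eq0 -lt0n.
have : cmod z <= (\sum_r cmod (y r)) / s.
  apply: le_trans; first exact: cmod_sum.
  rewrite mulr_suml; apply: ler_sum => r _.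
  by rewrite cmodM cmodJ cX mulrC.
rewrite zE cmodM cmodi mul1r cmodR ger0_norm //.
apply: mulr_ge0; first by rewrite divr_ge0 ?ler0n.
by apply: sumr_ge0 => i _; exact: cmod_ge0.
Qed.


End S.

Theorem mainTheorem3 (R : realType) (n : nat) (hn : (3 <= n)%N) (b : nat -> R[i]) :
  let B := tridB n b in
  [/\ \big[Num.max/0]_(0 <= i < n - 2)
          Num.sqrt (cmod (b i) ^+ 2 + cmod (b i.+1) ^+ 2) <= opnorm B,
      2 / n%:R * (\sum_(0 <= i < n - 1) cmod (b i)) <= opnorm B,
      opnorm B <= \big[Num.max/0]_(0 <= i < n - 2) (cmod (b i) + cmod (b i.+1))
    & opnorm B <= 2 * cos (pi / (n.+1)%:R) *
                  \big[Num.max/0]_(0 <= i < n - 1) cmod (b i)].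
Proof.
move=> B.
have HM := @ub3x R n b hn.
have op0 : 0 <= opnorm B.
  have h0 : (0 < n)%N by lia.
  apply: le_trans (@opnorm_ge R n B _ _ HM (@vnorm_ev R n 0 h0)); exact: vnorm_ge0.
split.
- rewrite big_seq; apply: bigmax_le => // i; rewrite mem_index_iota => /andP[_ hi].
  exact: (@lb1 R n b i _ hi HM).
- apply: (@lb2 R n b _ _ HM); lia.
- exact: (@ub3 R n b hn).
- exact: (@ub4 R n b hn).
Qed.
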